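(* Let $\mathcal{W}=\{W_s:s\in\mathcal{S}\}$ be an arbitrarily varying channel with channel state sequence known at the receiver (AVC-CSR), with finite alphabets $\mathcal{X},\mathcal{Y}$ and finite state set $\mathcal{S}$. The capacity $C^{CSR-DC}(\mathcal{W})$ of deterministic code with respect to the maximal decoding error probability is positive if and only if there exist $x,x'\in\mathcal{X}$ such that for every state $s\in\mathcal{S}$ there exists $y\in\mathcal{Y}$ with $W_s(y|x)\neq W_s(y|x')$.
   Context: For an AVC-CSR, $W(y^N|x^N,s^N)=\prod_{i=1}^NW_{s_i}(y_i|x_i)$; the state sequence $s^N\in\mathcal{S}^N$ is arbitrary, unknown to the transmitter and known to the receiver. A deterministic code of length $N$ is a pair $(f,\phi)$, $f:\mathcal{M}\to\mathcal{X}^N$, $\phi:\mathcal{Y}^N\times\mathcal{S}^N\to\mathcal{M}$, with maximal decoding error $\lambda^{CSR}(\mathcal{W},f,\phi)=\max_{s^N\in\mathcal{S}^N}\max_{m\in\mathcal{M}}\big[1-\sum_{y^N:\phi(y^N,s^N)=m}W(y^N|f(m),s^N)\big]$. $C^{CSR-DC}(\mathcal{W})$ is the supremum of $R\ge0$ such that for every $\epsilon>0$ and all sufficiently large $N$ there is a deterministic code with $\frac1N\log|\mathcal{M}|>R-\epsilon$ and $\lambda^{CSR}(\mathcal{W},f,\phi)<\epsilon$. *)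

(* Defs.v *)
From HB Require Import structures.
From mathcomp Require Import all_boot all_order all_algebra.
From mathcomp Require Import all_classical all_reals all_analysis.
Set Implicit Arguments. Unset Strict Implicit. Unset Printing Implicit Defensive.
Import Order.TTheory GRing.Theory Num.Theory.
Local Open Scope ring_scope.

Section AVC.
Variables (R : realType) (X Y S : finType).

(* An AVC: family of channels W_s(y|x), given as W s x y. *)
Definition stochastic_avc (W : S -> X -> Y -> R) : Prop :=
  forall s x, (forall y, 0 <= W s x y) /\ \sum_(y : Y) W s x y = 1.

Definition avc_prod (W : S -> X -> Y -> R) (N : nat)
  (xN : {ffun 'I_N -> X}) (sN : {ffun 'I_N -> S}) (yN : {ffun 'I_N -> Y}) : R :=
  \prod_(i < N) W (sN i) (xN i) (yN i).

Definition lambda_CSR (W : S -> X -> Y -> R) (N M : nat)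
  (f : 'I_M -> {ffun 'I_N -> X})
  (phi : {ffun 'I_N -> Y} -> {ffun 'I_N -> S} -> 'I_M) : R :=
  \big[Num.max/0]_(sN : {ffun 'I_N -> S})
    \big[Num.max/0]_(m : 'I_M)
      (1 - \sum_(yN : {ffun 'I_N -> Y} | phi yN sN == m) avc_prod W (f m) sN yN).

Definition achievable_CSR_DC (W : S -> X -> Y -> R) (R0 : R) : Prop :=
  0 <= R0 /\
  forall eps : R, 0 < eps ->
    exists N0 : nat, forall N : nat, (N0 <= N)%N ->
      exists (M : nat) (f : 'I_M -> {ffun 'I_N -> X})
             (phi : {ffun 'I_N -> Y} -> {ffun 'I_N -> S} -> 'I_M),
        (0 < M)%N /\
        R0 - eps < (ln (M%:R : R) / ln 2) / N%:R /\
        lambda_CSR W f phi < eps.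

Definition cap_CSR_DC (W : S -> X -> Y -> R) : \bar R :=
  ereal_sup [set (r%:E) | r in [set r | achievable_CSR_DC W r]].

End AVC.

(* Main.v *)
Require Import Defs.
From HB Require Import structures.
From mathcomp Require Import all_boot all_order all_algebra.
From mathcomp Require Import all_classical all_reals all_analysis.
From mathcomp Require Import ring lra zify.
From Stdlib Require Classical_Prop.
Import Order.TTheory GRing.Theory Num.Theory.
Local Open Scope ring_scope.
Set Implicit Arguments. Unset Strict Implicit. Unset Printing Implicit Defensive.

Section Comb.
Local Open Scope nat_scope.
Variable N : nat.
Local Notation word := {ffun 'I_N -> bool}.

Definition dist (c c' : word) : nat := \sum_i (c i != c' i).

Lemma dist_sym c c' : dist c c' = dist c' c.
Proof. by apply: eq_bigr => i _; rewrite eq_sym. Qed.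

Lemma dist_xx c : dist c c = 0.
Proof. by apply: big1 => i _; rewrite eqxx. Qed.

Lemma expn_sum (m : nat) (F : 'I_N -> nat) : m ^ (\sum_i F i) = \prod_i m ^ (F i).
Proof. exact: (big_morph (expn m) (expnD m) (expn0 m)). Qed.

Lemma ball_bound (c : word) r :
  (\sum_(w : word) (dist c w <= r)) * 2 ^ N <= 2 ^ r * 3 ^ N.
Proof.
pose a (w : word) := \sum_i (c i == w i).
have ad w : dist c w + a w = N.
  rewrite /dist /a -big_split /=.
  rewrite (eq_bigr (fun _ => 1)) ?sum_nat_const ?card_ord ?muln1 //.
  by move=> i _; rewrite addn_negb.
have -> : 3 ^ N = \sum_(w : word) 2 ^ a w.
  rewrite /a (eq_bigr (fun w : word => \prod_i 2 ^ (c i == w i))); last first.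
    by move=> w _; rewrite expn_sum.
  rewrite -(bigA_distr_bigA (fun i b => 2 ^ (c i == b))) /=.
  rewrite (eq_bigr (fun _ => 3)) ?prod_nat_const ?card_ord //.
  by move=> i _; rewrite big_bool /=; case: (c i).
rewrite big_distrl big_distrr /=; apply: leq_sum => w _.
case: (boolP (dist c w <= r)) => hd /=; last by rewrite mul0n.
rewrite mul1n -expnD -{1}(ad w) addnC leq_exp2l //; lia.
Qed.

Lemma code_exists r : exists C : {set word},
  (forall c c', c \in C -> c' \in C -> c != c' -> r < dist c c') /\
  2 ^ N * 2 ^ N <= #|C| * (2 ^ r * 3 ^ N).
Proof.
pose P (C : {set word}) := [forall c in C, forall c' in C, (c != c') ==> (r < dist c c')].
have P0 : P finset.set0 by apply/forallP => c; rewrite finset.in_set0.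
case: (arg_maxnP (fun C : {set word} => #|C|) P0) => C PC Cmax.
exists C; split.
  move=> c c' cC c'C ne.
  by move/forallP: PC => /(_ c); rewrite cC /= => /forallP /(_ c'); rewrite c'C ne.
have cover w : [exists c in C, dist c w <= r].
  case: (boolP (w \in C)) => wC; first by apply/existsP; exists w; rewrite wC dist_xx.
  case: (boolP [exists c in C, dist c w <= r]) => // /existsPn H.
  have Pw : P (w |: C).
    apply/forallP => c; apply/implyP => /setU1P [->|cC];
      apply/forallP => c'; apply/implyP => /setU1P [->|c'C]; apply/implyP => ne.
    - by rewrite eqxx in ne.
    - by move: (H c'); rewrite c'C /= -ltnNge dist_sym.
    - by move: (H c); rewrite cC /= -ltnNge.
    - by move/forallP: PC => /(_ c); rewrite cC /= => /forallP /(_ c'); rewrite c'C ne.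
  have := Cmax _ Pw; rewrite cardsU1 wC /=.
  by rewrite add1n ltnn.
have h1 : 2 ^ N <= \sum_(c in C) \sum_(w : word) (dist c w <= r).
  rewrite (exchange_big_dep xpredT) //=.
  have -> : 2 ^ N = \sum_(w : word) 1.
    by rewrite sum_nat_const card_ffun card_bool card_ord muln1.
  apply: leq_sum => w _.
  have /existsP [c /andP [cC hc]] := cover w.
  by rewrite (bigD1 c) ?cC //= hc.
apply: (leq_trans (leq_mul h1 (leqnn (2 ^ N)))).
rewrite big_distrl /= -sum_nat_const.
by apply: leq_sum => c _; apply: ball_bound.
Qed.

End Comb.

Section Vol.
Local Open Scope nat_scope.
Lemma vol_ok N : 4 ^ (N %/ 8) * 3 ^ N <= 2 ^ N * 2 ^ N.
Proof.
rewrite -expnMn {2 3}(divn_eq N 8) !expnD !mulnA.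
apply: leq_mul.
  rewrite ![_ %/ 8 * 8]mulnC !expnM -expnMn.
  have h : 4 * 3 ^ 8 <= (2 * 2) ^ 8.
    rewrite !expnS expn0. lia.
  case: (N %/ 8) => [|q]; first by rewrite !expn0.
  by rewrite (leq_exp2r _ _ (ltn0Sn q)) h.
case: (N %% 8) => [|e]; first by rewrite !expn0.
by rewrite (leq_exp2r _ _ (ltn0Sn e)).
Qed.
End Vol.

Section Gen.
Variables (R : realType) (X Y S : finType) (W : S -> X -> Y -> R).
Hypothesis hW : stochastic_avc W.

Lemma W_ge0 s x y : 0 <= W s x y. Proof. by case: (hW s x) => H _; apply: H. Qed.
Lemma W_sum1 s x : \sum_y W s x y = 1. Proof. by case: (hW s x). Qed.

Lemma avc_prod_ge0 N (xN : {ffun 'I_N -> X}) sN yN : 0 <= avc_prod W xN sN yN.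
Proof. by apply: prodr_ge0 => i _; apply: W_ge0. Qed.

Lemma avc_prod_sum1 N (xN : {ffun 'I_N -> X}) sN :
  \sum_(yN : {ffun 'I_N -> Y}) avc_prod W xN sN yN = 1.
Proof.
rewrite /avc_prod -(bigA_distr_bigA (fun i y => W (sN i) (xN i) y)).
by apply: big1 => i _; apply: W_sum1.
Qed.

Definition BC s a b := \sum_y Num.sqrt (W s a y * W s b y).

Lemma BC_ge0 s a b : 0 <= BC s a b.
Proof. by apply: sumr_ge0 => y _; apply: sqrtr_ge0. Qed.

Lemma BC_same s a : BC s a a = 1.
Proof.
rewrite /BC -(W_sum1 s a); apply: eq_bigr => y _.
by rewrite -expr2 sqrtr_sqr ger0_norm // W_ge0.
Qed.

Lemma BC_sym s a b : BC s a b = BC s b a.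
Proof. by apply: eq_bigr => y _; rewrite mulrC. Qed.

Lemma BC_lt1 s a b y0 : W s a y0 <> W s b y0 -> BC s a b < 1.
Proof.
move=> hne.
have key : \sum_y (Num.sqrt (W s a y) - Num.sqrt (W s b y)) ^+ 2 =
     \sum_y W s a y + \sum_y W s b y - 2 * BC s a b.
  rewrite /BC mulr_sumr -big_split -sumrB; apply: eq_bigr => y _.
  rewrite sqrrB !sqr_sqrtr ?W_ge0 // sqrtrM ?W_ge0 //.
  rewrite -mulr_natl /=; ring.
rewrite !W_sum1 in key.
have pos : 0 < \sum_y (Num.sqrt (W s a y) - Num.sqrt (W s b y)) ^+ 2.
  rewrite (bigD1 y0) //=.
  apply: (@lt_le_trans _ _ ((Num.sqrt (W s a y0) - Num.sqrt (W s b y0)) ^+ 2)).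
    rewrite lt_def sqr_ge0 andbT sqrf_eq0 subr_eq0; apply/eqP => e; apply: hne.
    by rewrite -(sqr_sqrtr (W_ge0 s a y0)) -(sqr_sqrtr (W_ge0 s b y0)) e.
  by rewrite lerDl; apply: sumr_ge0 => y _; apply: sqr_ge0.
rewrite key in pos; move: pos; set z := BC s a b; clearbody z; move=> pos; lra.
Qed.

Lemma sqrt_prod (I : finType) (c : I -> R) : (forall i, 0 <= c i) ->
  Num.sqrt (\prod_i c i) = \prod_i Num.sqrt (c i).
Proof.
move=> c0.
rewrite -[RHS]ger0_norm; last by apply: prodr_ge0 => i _; apply: sqrtr_ge0.
rewrite -sqrtr_sqr -prodrXl; congr Num.sqrt; apply: eq_bigr => i _.
by rewrite sqr_sqrtr.
Qed.

Lemma sum_sqrt_BC N (u v : {ffun 'I_N -> X}) sN :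
  \sum_(yN : {ffun 'I_N -> Y}) Num.sqrt (avc_prod W u sN yN * avc_prod W v sN yN)
  = \prod_i BC (sN i) (u i) (v i).
Proof.
rewrite /BC (bigA_distr_bigA (fun i y => Num.sqrt (W (sN i) (u i) y * W (sN i) (v i) y))).
apply: eq_bigr => yN _; rewrite /avc_prod -big_split /= sqrt_prod //.
by move=> i; rewrite mulr_ge0 ?W_ge0.
Qed.


Definition mldec N M (f : 'I_M -> {ffun 'I_N -> X}) (m0 : 'I_M)
  (yN : {ffun 'I_N -> Y}) (sN : {ffun 'I_N -> S}) : 'I_M :=
  [arg max_(m > m0) avc_prod W (f m) sN yN]%O.

Lemma mldec_max N M (f : 'I_M -> {ffun 'I_N -> X}) m0 yN sN m :
  avc_prod W (f m) sN yN <= avc_prod W (f (mldec f m0 yN sN)) sN yN.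
Proof. by rewrite /mldec; case: arg_maxP => // i _ H; apply: H. Qed.

Lemma err_le N M (f : 'I_M -> {ffun 'I_N -> X}) m0 sN m :
  1 - \sum_(yN | mldec f m0 yN sN == m) avc_prod W (f m) sN yN
  <= \sum_(m' | m' != m) \prod_i BC (sN i) (f m i) (f m' i).
Proof.
have H1 := avc_prod_sum1 (f m) sN.
rewrite -{1}H1 (bigID (fun yN => mldec f m0 yN sN == m)) /= addrC addrK.
apply: (@le_trans _ _ (\sum_(yN : {ffun 'I_N -> Y}) \sum_(m' | m' != m)
   Num.sqrt (avc_prod W (f m) sN yN * avc_prod W (f m') sN yN))).
  rewrite [X in X <= _]big_mkcond; apply: ler_sum => yN _.
  case: ifP => [hne|_]; last by apply: sumr_ge0 => m' _; apply: sqrtr_ge0.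
  rewrite (bigD1 (mldec f m0 yN sN)) //=.
  apply: (@le_trans _ _ (Num.sqrt (avc_prod W (f m) sN yN *
      avc_prod W (f (mldec f m0 yN sN)) sN yN))); last first.
    by rewrite lerDl; apply: sumr_ge0 => m' _; apply: sqrtr_ge0.
  rewrite -{1}(ger0_norm (avc_prod_ge0 (f m) sN yN)) -sqrtr_sqr expr2.
  by apply: ler_wsqrtr; apply: ler_wpM2l; [apply: avc_prod_ge0 | apply: mldec_max].
rewrite (exchange_big_dep (fun _ => true)) //= [leRHS]big_mkcond /=; apply: ler_sum => j _.
case: ifP => _; first by rewrite sum_sqrt_BC.
by rewrite big_pred0.
Qed.

End Gen.

Lemma exp_small (R : realType) (q e : R) : 0 <= q < 1 -> 0 < e -> exists n : nat, q ^+ n < e.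
Proof.
move=> /andP[q0 q1] e0.
have hq : `|q| < 1 by rewrite ger0_norm.
move/cvgr0_norm_lt: (cvg_expr hq) => /(_ _ e0)[N _ HN].
exists N; have := HN N (leqnn N) => /=.
by rewrite ger0_norm // exprn_ge0.
Qed.

Section Main.
Variables (R : realType) (X Y S : finType) (W : S -> X -> Y -> R).
Hypothesis hW : stochastic_avc W.
Variables (x0 x1 : X).

Definition enc N (c : {ffun 'I_N -> bool}) : {ffun 'I_N -> X} :=
  [ffun i => if c i then x1 else x0].

Definition rho : R := \big[Num.max/0]_s BC W s x0 x1.

Lemma rho_ge0 : 0 <= rho.
Proof.
by apply: (big_ind (fun v : R => 0 <= v)) => //= [a b ha hb|s _]; [rewrite le_max ha|exact: BC_ge0].
Qed.

Lemma BC_le_rho s : BC W s x0 x1 <= rho.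
Proof. by rewrite /rho (bigD1 s) //= le_max lexx. Qed.

Lemma rho_lt1 : (forall s, exists y, W s x0 y <> W s x1 y) -> rho < 1.
Proof.
move=> h; apply: (big_ind (fun v : R => v < 1)) => //= [a b ha hb|s _]; first by rewrite gt_max ha hb.
by have [y hy] := h s; apply: (BC_lt1 hW hy).
Qed.

Lemma prodBC_le N (sN : {ffun 'I_N -> S}) (c c' : {ffun 'I_N -> bool}) :
  \prod_i BC W (sN i) (enc c i) (enc c' i) <= rho ^+ dist c c'.
Proof.
rewrite /dist (big_morph (GRing.exp rho) (exprD rho) (expr0 rho)).
apply: ler_prod => i _; rewrite BC_ge0 /= !ffunE.
case: (c i); case: (c' i) => /=; rewrite ?BC_same ?expr0 ?expr1 //.
  by rewrite BC_sym BC_le_rho.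
by rewrite BC_le_rho.
Qed.


Lemma achieve : (forall s, exists y, W s x0 y <> W s x1 y) ->
  exists R0 : R, 0 < R0 /\ achievable_CSR_DC W R0.
Proof.
move=> h.
have r1 := rho_lt1 h; have r0 := rho_ge0.
have i4 : (4:R)^-1 < 1 by rewrite invf_lt1 ?ltr0n ?ltr1n.
have i2 : (2:R)^-1 < 1 by rewrite invf_lt1 ?ltr0n ?ltr1n.
have [t ht] : exists t : nat, rho ^+ t < 4^-1.
  by apply: exp_small; [rewrite r0 r1 | rewrite invr_gt0 ltr0n].
have t0 : (0 < t)%N.
  by case: t ht => // ht; move: (lt_trans ht i4); rewrite expr0 ltxx.
set B := (8 * t)%N.
have B0 : (0 < B)%N by rewrite muln_gt0 t0.
exists ((2 * B)%:R^-1); split; first by rewrite invr_gt0 ltr0n muln_gt0 B0.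
split; first by rewrite invr_ge0 ler0n.
move=> eps eps0.
have [K0 hK0] : exists K0 : nat, (2:R)^-1 ^+ K0 < eps.
  by apply: exp_small => //; rewrite invr_ge0 ler0n i2.
exists (B * K0.+1)%N => N hN.
set k := (N %/ B)%N; set r := (N %/ 8)%N.
have kK : (K0 < k)%N by rewrite /k leq_divRL // mulnC.
have tkr : (t * k <= r)%N.
  rewrite /r leq_divRL //; apply: leq_trans (leq_divM N B).
  rewrite -/k /B; nia.
have kr : (k <= r)%N by apply: leq_trans tkr; rewrite leq_pmull.
have k1 : (0 < k)%N by apply: leq_ltn_trans kK.
have [C [HC HV]] := code_exists N r.
set M := (2 ^ k)%N.
have MC : (M <= #|C|)%N.
  have X0 : (0 < 2 ^ r * 3 ^ N)%N by rewrite muln_gt0 !expn_gt0.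
  rewrite -(leq_pmul2r X0); apply: leq_trans HV.
  apply: leq_trans (vol_ok N).
  rewrite mulnA leq_mul2r; apply/orP; right.
  by rewrite -[4%N]/(2*2)%N expnMn leq_mul2r leq_exp2l // kr orbT.
pose wd (m : 'I_M) : {ffun 'I_N -> bool} := enum_val (widen_ord MC m).
have wdC m : wd m \in C by apply: enum_valP.
have wd_inj : injective wd.
  by move=> a c /enum_val_inj /(congr1 val) /= ?; apply: val_inj.
pose f m := enc (wd m).
have M0 : (0 < M)%N by rewrite expn_gt0.
pose m0 : 'I_M := Ordinal M0.
exists M, f, (mldec W f m0); split; first exact: M0.
split.
  have l2 : 0 < ln (2:R) by apply: ln_gt0; rewrite ltr1n.
  rewrite /M natrX lnXn ?ltr0n // -[ln 2 *+ k]mulr_natr [ln 2 * _ / _]mulrAC divff ?mul1r ?gt_eqF //.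
  apply: (@lt_le_trans _ _ ((2 * B)%:R^-1)); first by rewrite ltrBlDr ltrDl eps0.
  have N0 : (0 < N)%N by apply: leq_trans hN; rewrite muln_gt0 B0.
  rewrite ler_pdivlMr ?ltr0n // mulrC ler_pdivrMr ?ltr0n ?muln_gt0 // -natrM ler_nat.
  apply: leq_trans (ltnW (ltn_ceil N B0)) _; rewrite -/k mulnA leq_mul2r; apply/orP; right.
  lia.
rewrite /lambda_CSR.
set b := (2:R)^-1 ^+ k.
have b0 : 0 <= b by rewrite exprn_ge0 // invr_ge0 ler0n.
apply: (@le_lt_trans _ _ b); last first.
  apply: le_lt_trans hK0; apply: ler_wiXn2l; [by rewrite invr_ge0 ler0n|exact: ltW|exact: ltnW].
apply: (big_ind (fun v : R => v <= b)) => //= [a c ha hc|sN _]; first by rewrite ge_max ha hc.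
apply: (big_ind (fun v : R => v <= b)) => //= [a c ha hc|m _]; first by rewrite ge_max ha hc.
apply: le_trans (err_le hW f m0 sN m) _.
apply: (@le_trans _ _ (\sum_(m' | m' != m) rho ^+ r)).
  apply: ler_sum => m' hm'; apply: le_trans (prodBC_le _ _ _) _.
  apply: ler_wiXn2l; [exact: r0|exact: ltW|apply: ltnW; apply: HC; rewrite ?wdC //].
  by apply: contra hm' => /eqP /wd_inj ->.
apply: (@le_trans _ _ (\sum_(m' : 'I_M) rho ^+ r)).
  by rewrite [leRHS](bigD1 m) //= lerDr exprn_ge0.
rewrite sumr_const card_ord /b.
apply: (@le_trans _ _ ((4:R)^-1 ^+ k *+ M)).
  rewrite lerMn2r; apply/orP; right.
  apply: le_trans (ler_wiXn2l r0 (ltW r1) tkr) _; rewrite exprM.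
  by apply: lerXn2r; rewrite ?nnegrE ?exprn_ge0 ?invr_ge0 ?ler0n // ltW.
rewrite /M -mulr_natr natrX -exprMn.
have -> : (4:R)^-1 * 2%:R = 2^-1 by field.
by [].
Qed.

End Main.

Section Conv.
Variables (R : realType) (X Y S : finType) (W : S -> X -> Y -> R).
Hypothesis hW : stochastic_avc W.

Lemma converse : (forall x x', exists s, forall y, W s x y = W s x' y) ->
  forall R0, achievable_CSR_DC W R0 -> R0 <= 0.
Proof.
move=> h R0 [R00 Hach].
rewrite leNgt; apply/negP => R0pos.
set eps := Num.min R0 1 / 2.
have e1 : eps <= R0 / 2 by rewrite ler_pM2r ?ge_min ?lexx // invr_gt0 ltr0n.
have e2 : eps <= 1 / 2 by rewrite ler_pM2r ?ge_min ?lexx ?orbT // invr_gt0 ltr0n.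
have eps0 : 0 < eps by rewrite divr_gt0 // lt_min R0pos ltr01.
have [N0 HN] := Hach eps eps0.
have [M [f [phi [M0 [rate err]]]]] := HN N0.+1 (leqnSn N0).
have M1 : (1 < M)%N.
  case: M f phi M0 rate err => [|[|M]] f phi // _ rate _.
  move: rate; rewrite ln1 !mul0r => rate.
  have : R0 - eps > 0 by lra.
  by rewrite ltNge (ltW rate).
pose m1 : 'I_M := Ordinal (ltnW M1).
pose m2 : 'I_M := Ordinal M1.
have m12 : m1 != m2 by [].
pose u := f m1; pose v := f m2.
have [sF hs] := fin_all_exists (fun i : 'I_N0.+1 => h (u i) (v i)).
pose sN : {ffun 'I_N0.+1 -> S} := [ffun i => sF i].
have Puv yN : avc_prod W u sN yN = avc_prod W v sN yN.
  by apply: eq_bigr => i _; rewrite ffunE hs.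
pose e (m : 'I_M) := 1 - \sum_(yN | phi yN sN == m) avc_prod W (f m) sN yN.
have le_lam m : e m <= lambda_CSR W f phi.
  rewrite /lambda_CSR (bigD1 sN) //= le_max; apply/orP; left.
  by rewrite (bigD1 m) //= le_max lexx.
have sum12 : 1 <= e m1 + e m2.
  rewrite /e -/u -/v.
  have : \sum_(yN | phi yN sN == m1) avc_prod W u sN yN +
         \sum_(yN | phi yN sN == m2) avc_prod W u sN yN <= 1.
    rewrite -(avc_prod_sum1 hW u sN) big_mkcond [X in _ + X <= _]big_mkcond -big_split /=.
    apply: ler_sum => yN _.
    case: (phi yN sN =P m1) => [e1'|n1]; case: (phi yN sN =P m2) => [e2'|n2].
    - by move: m12; rewrite -e1' -e2' eqxx.
    - by rewrite addr0.
    - by rewrite add0r.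
    - by rewrite addr0 avc_prod_ge0.
  have -> : \sum_(yN | phi yN sN == m2) avc_prod W v sN yN =
     \sum_(yN | phi yN sN == m2) avc_prod W u sN yN by apply: eq_bigr => yN _; rewrite Puv.
  lra.
have := le_lam m1; have := le_lam m2.
move: err sum12; set l := lambda_CSR W f phi; move=> err sum12 h1 h2.
lra.
Qed.

End Conv.

Theorem proposition2 (R : realType) (X Y S : finType) (W : S -> X -> Y -> R) :
  stochastic_avc W ->
  ((0%E < cap_CSR_DC W)%E <->
   exists x x' : X, forall s : S, exists y : Y, W s x y <> W s x' y).
Proof.
move=> hW; split.
  move=> /ereal_sup_gt [z [r hr <-] r0].
  apply: Classical_Prop.NNPP => hn.
  have h : forall x x', exists s, forall y, W s x y = W s x' y.
    move=> x x'; apply: Classical_Prop.NNPP => hs; apply: hn; exists x, x' => s.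
    apply: Classical_Prop.NNPP => hy; apply: hs; exists s => y.
    apply: Classical_Prop.NNPP => hy'; apply: hy; exists y; exact: hy'.
  have := converse hW h hr.
  by rewrite leNgt -lte_fin r0.
move=> [x0 [x1 h]].
have [R0 [R0pos hR0]] := achieve hW h.
apply: (@lt_le_trans _ _ R0%:E); first by rewrite lte_fin.
by apply: ereal_sup_ubound; exists R0.
Qed.
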